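(* Let $Z\in\mathcal{H}_3$ be the period matrix of a simple genus $3$ hyperelliptic Jacobian such that $\vartheta[\delta](Z)=0$ for exactly one even characteristic class $\delta\in\frac12\mathbb{Z}^6/\mathbb{Z}^6$, and $\delta\neq 0$. Then there is $\gamma\in\Gamma_{1,2}$ such that $Z$ satisfies the Vanishing Criterion for the map $\eta=\gamma\tilde\eta$, i.e. for every $S\subseteq B$ with $\#S$ even, $\vartheta[\eta_S](Z)=0$ if and only if $\#(S\circ U_\eta)\neq 4$. Furthermore, this $\gamma$ can be taken to be any $\gamma\in\Gamma_{1,2}$ such that $\gamma\,(\tfrac12,\tfrac12,\tfrac12,\tfrac12,0,\tfrac12)^T\equiv\delta \pmod{\mathbb{Z}^6}$.
   Context: $\mathcal{H}_g$ is the set of complex symmetric $g\times g$ matrices with positive definite imaginary part. For $x\in\mathbb{C}^{6}$ write $x=(x_1,x_2)$ with $x_1$ the first $3$ and $x_2$ the last $3$ entries. Let $B=\{1,2,\dots,7,\infty\}$, $S_1\circ S_2=(S_1\cup S_2)\setminus(S_1\cap S_2)$, $S^c=B\setminus S$. For $\xi,\zeta\in\frac12\mathbb{Z}^{6}$: $e_*(\xi)=\exp(4\pi i\,\xi_1^T\xi_2)$ and $e_2(\xi,\zeta)=\exp(4\pi i\,\xi^TJ\zeta)$ with $J=\begin{pmatrix}0&\mathbb{1}_3\\-\mathbb{1}_3&0\end{pmatrix}$. $\Xi_3$ is the set of maps $\eta$ from subsets of $B$ to $\frac12\mathbb{Z}^6$ such that: (i) $\eta(\{\infty\})=0$; (ii)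 $\eta(S)=\sum_{i\in S}\eta(\{i\})$; (iii) $\eta(S)\equiv\eta(S^c)$ mod $\mathbb{Z}^6$ and the induced map from the group of even-cardinality subsets of $B$ modulo $S\sim S^c$ (under $\circ$) to $\frac12\mathbb{Z}^6/\mathbb{Z}^6$ is a group isomorphism; (iv) for $\#S_1,\#S_2$ even, $e_2(\eta(S_1),\eta(S_2))=(-1)^{\#(S_1\cap S_2)}$; (v) there is $U_\eta\subseteq B$ with $\#U_\eta\equiv 4\pmod 4$ such that for all $S$ of even cardinality $e_*(\eta(S))=(-1)^{(4-\#(S\circ U_\eta))/2}$ (one has $U_\eta=\{i\neq\infty: e_*(\eta(\{i\}))=-1\}\cup\{\infty\}$). Write $\eta_S=\eta(S)$, $\eta_i=\eta(\{i\})$. Theta constants: for $\xi\in\frac12\mathbb{Z}^6$, $\vartheta[\xi](Z)=\exp(\pi i\xi_1^TZ\xi_1+2\pi i\xi_1^T\xi_2)\sum_{n\in\mathbb{Z}^3}\exp(\pi i n^TZn+2\pi i n^T(\xi_2+Z\xi_1))$; $\xi$ is even if $e_*(\xi)=1$; vanishing of $\vartheta[\xi](Z)$ depends only on $\xi$ mod $\mathbb{Z}^6$. $\mathrm{Sp}_6(\mathbb{Z})$ is the group of integer $6\times6$ matrices preserving the form $x_1^Ty_2-x_2^Ty_1$; it acts on maps $\eta$ by $(\gamma\eta)(S)=\gamma\,\eta(S)$ (matrix times column vector), considered modulo $\mathbb{Z}^6$. With $Q(x)=x_1^Tx_2$, $\Gamma_{1,2}=\{\gamma\in\mathrm{Sp}_6(\mathbb{Z}):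 Q(\gamma x)\equiv Q(x)\pmod 2\}$. Mumford's map $\tilde\eta\in\Xi_3$ is determined (mod $\mathbb{Z}^6$) by $\tilde\eta_1=(\tfrac12,0,0,0,0,0)$, $\tilde\eta_2=(\tfrac12,0,0,\tfrac12,0,0)$, $\tilde\eta_3=(0,\tfrac12,0,\tfrac12,0,0)$, $\tilde\eta_4=(0,\tfrac12,0,\tfrac12,\tfrac12,0)$, $\tilde\eta_5=(0,0,\tfrac12,\tfrac12,\tfrac12,0)$, $\tilde\eta_6=(0,0,\tfrac12,\tfrac12,\tfrac12,\tfrac12)$, $\tilde\eta_7=(0,0,0,\tfrac12,\tfrac12,\tfrac12)$; it has $U_{\tilde\eta}=\{2,4,6,\infty\}$ and $\tilde\eta_{U_{\tilde\eta}}\equiv(\tfrac12,\tfrac12,\tfrac12,\tfrac12,0,\tfrac12)$. *)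

(* Defs.v *)
From Stdlib Require Import Reals ZArith Arith Lia ClassicalDescription.
From Coquelicot Require Import Coquelicot.

Open Scope R_scope.

Definition cexp (z : C) : C := (exp (fst z) * cos (snd z), exp (fst z) * sin (snd z)).

Definition cI : C := (0, 1).
Definition cPI : C := RtoC PI.

Fixpoint csum (n : nat) (f : nat -> C) : C :=
  match n with O => RtoC 0 | S k => Cplus (csum k f) (f k) end.

Fixpoint rsum (n : nat) (f : nat -> R) : R :=
  match n with O => 0 | S k => rsum k f + f k end.

Fixpoint zsum (n : nat) (f : nat -> Z) : Z :=
  match n with O => 0%Z | S k => (zsum k f + f k)%Z end.

(** A 3x3 complex matrix is Z : nat -> nat -> C (entries i,j < 3 used).
    Siegel upper half space H_3: symmetric with positive definite imaginary part. *)
Definition in_H3 (Zm : nat -> nat -> C) : Prop :=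
  (forall i j, (i < 3)%nat -> (j < 3)%nat -> Zm i j = Zm j i) /\
  (forall v : nat -> R, (exists i, (i < 3)%nat /\ v i <> 0) ->
     0 < rsum 3 (fun i => rsum 3 (fun j => v i * Im (Zm i j) * v j))).

(** Characteristics xi in (1/2) Z^6 are represented by their numerators
    a : nat -> Z (entries 0..5), i.e. xi_k = a k / 2.
    xi_1 = entries 0,1,2 ; xi_2 = entries 3,4,5. *)
Definition hchar := nat -> Z.
Definition half (a : hchar) (k : nat) : C := RtoC (IZR (a k) / 2).

Definition estar (a : hchar) : C :=
  cexp (Cmult (Cmult (RtoC 4) (Cmult cPI cI))
              (csum 3 (fun j => Cmult (half a j) (half a (j + 3)%nat)))).

Definition heven (a : hchar) : Prop := estar a = RtoC 1.

Definition hequiv (a b : hchar) : Prop :=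
  forall k, (k < 6)%nat -> Z.modulo (a k - b k) 2 = 0%Z.

Definition hzero : hchar := fun _ => 0%Z.

(** The sum over Z^3 is taken as the limit of the sums over the boxes [-N,N]^3. *)
Definition theta_prefactor (a : hchar) (Zm : nat -> nat -> C) : C :=
  cexp (Cplus
    (Cmult (Cmult cPI cI)
       (csum 3 (fun j => csum 3 (fun k => Cmult (Cmult (half a j) (Zm j k)) (half a k)))))
    (Cmult (Cmult (RtoC 2) (Cmult cPI cI))
       (csum 3 (fun j => Cmult (half a j) (half a (j + 3)%nat))))).

Definition theta_term (a : hchar) (Zm : nat -> nat -> C) (n : nat -> Z) : C :=
  let nC := fun j => RtoC (IZR (n j)) in
  cexp (Cplus
    (Cmult (Cmult cPI cI)
       (csum 3 (fun j => csum 3 (fun k => Cmult (Cmult (nC j) (Zm j k)) (nC k)))))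
    (Cmult (Cmult (RtoC 2) (Cmult cPI cI))
       (csum 3 (fun j => Cmult (nC j)
          (Cplus (half a (j + 3)%nat) (csum 3 (fun k => Cmult (Zm j k) (half a k)))))))).

Definition vec3 (x y z : Z) : nat -> Z :=
  fun j => match j with O => x | 1 => y | 2 => z | _ => 0%Z end.

Definition theta_box (a : hchar) (Zm : nat -> nat -> C) (N : nat) : C :=
  let c := fun k : nat => (Z.of_nat k - Z.of_nat N)%Z in
  csum (2 * N + 1) (fun k1 => csum (2 * N + 1) (fun k2 => csum (2 * N + 1) (fun k3 =>
    theta_term a Zm (vec3 (c k1) (c k2) (c k3))))).

Definition theta_value (a : hchar) (Zm : nat -> nat -> C) (v : C) : Prop :=
  exists l : C, filterlim (theta_box a Zm) eventually (locally l) /\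
                v = Cmult (theta_prefactor a Zm) l.

Definition theta_vanishes (a : hchar) (Zm : nat -> nat -> C) : Prop :=
  theta_value a Zm (RtoC 0).

Definition mv (g : nat -> nat -> Z) (x : nat -> Z) : nat -> Z :=
  fun i => zsum 6 (fun j => (g i j * x j)%Z).

Definition sform (x y : nat -> Z) : Z :=
  zsum 3 (fun i => (x i * y (i + 3)%nat - x (i + 3)%nat * y i)%Z).

Definition Sp6Z (g : nat -> nat -> Z) : Prop :=
  forall x y : nat -> Z, sform (mv g x) (mv g y) = sform x y.

Definition Qf (x : nat -> Z) : Z := zsum 3 (fun i => (x i * x (i + 3)%nat)%Z).

Definition Gamma12 (g : nat -> nat -> Z) : Prop :=
  Sp6Z g /\ forall x : nat -> Z, Z.modulo (Qf (mv g x) - Qf x) 2 = 0%Z.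

(** Subsets of B = {1,...,7,oo} as S : nat -> bool, index i-1 <-> element i
    (i = 1..7) and index 7 <-> oo; indices >= 8 are ignored. *)
Definition cardB (S : nat -> bool) : nat :=
  List.length (List.filter S (List.seq 0 8)).

Definition symdiff (S T : nat -> bool) : nat -> bool := fun i => xorb (S i) (T i).

Definition singletonB (i : nat) : nat -> bool := fun j => Nat.eqb i j.

(** Mumford's map (numerators): eta~_{i+1} for index i = 0..6; eta~_oo = 0. *)
Definition vec6 (a b c d e f : Z) : nat -> Z :=
  fun j => match j with O => a | 1 => b | 2 => c | 3 => d | 4 => e | 5 => f | _ => 0%Z end.

Definition eta_tilde_pt (i : nat) : nat -> Z :=
  match i with
  | O => vec6 1 0 0 0 0 0
  | 1 => vec6 1 0 0 1 0 0
  | 2 => vec6 0 1 0 1 0 0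
  | 3 => vec6 0 1 0 1 1 0
  | 4 => vec6 0 0 1 1 1 0
  | 5 => vec6 0 0 1 1 1 1
  | 6 => vec6 0 0 0 1 1 1
  | _ => vec6 0 0 0 0 0 0
  end.

Definition eta_tilde (S : nat -> bool) : hchar :=
  fun k => zsum 8 (fun i => if S i then eta_tilde_pt i k else 0%Z).

Definition geta (g : nat -> nat -> Z) (S : nat -> bool) : hchar := mv g (eta_tilde S).

Definition U_geta (g : nat -> nat -> Z) : nat -> bool := fun i =>
  if Nat.eqb i 7 then true
  else if Nat.ltb i 7 then
    (if excluded_middle_informative (estar (geta g (singletonB i)) = RtoC (-1))
     then true else false)
  else false.

Definition vanishing_criterion (Zm : nat -> nat -> C) (g : nat -> nat -> Z) : Prop :=
  forall S : nat -> bool, Nat.even (cardB S) = true ->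
    (theta_vanishes (geta g S) Zm <-> cardB (symdiff S (U_geta g)) <> 4%nat).

(** numerators of (1/2,1/2,1/2,1/2,0,1/2) = eta~_{U_{eta~}} *)
Definition vU : nat -> Z := vec6 1 1 1 1 0 1.

(* Main.v *)
Require Import Defs.
From Stdlib Require Import Reals ZArith Lia Lra Psatz.
From Coquelicot Require Import Coquelicot.

Open Scope R_scope.

Lemma csum_ext n f g : (forall k, (k < n)%nat -> f k = g k) -> csum n f = csum n g.
Proof. induction n; simpl; intros H; auto. rewrite IHn by (intros; apply H; lia). rewrite H by lia. auto. Qed.

Lemma rsum_ext n f g : (forall k, (k < n)%nat -> f k = g k) -> rsum n f = rsum n g.
Proof. induction n; simpl; intros H; auto. rewrite IHn by (intros; apply H; lia). rewrite H by lia. auto. Qed.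

Lemma csum_split m n f : csum (m + n) f = Cplus (csum m f) (csum n (fun k => f (m + k)%nat)).
Proof. induction n; simpl. rewrite Nat.add_0_r, Cplus_0_r. auto.
 rewrite Nat.add_succ_r; simpl. rewrite IHn. rewrite Cplus_assoc. auto. Qed.

Lemma csum_zero n f : (forall k, (k < n)%nat -> f k = RtoC 0) -> csum n f = RtoC 0.
Proof. induction n; simpl; intros H; auto. rewrite IHn by (intros; apply H; lia). rewrite H by lia. apply Cplus_0_r. Qed.

Lemma csum_shift1 n f : csum (S n) f = Cplus (f 0%nat) (csum n (fun k => f (S k))).
Proof. change (S n) with (1 + n)%nat. rewrite csum_split. simpl. rewrite Cplus_0_l. auto. Qed.

Lemma csum_rev n f : csum n f = csum n (fun k => f (n - 1 - k)%nat).
Proof. revert f; induction n; intros f; auto.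
 rewrite csum_shift1. simpl csum at 2. rewrite (IHn (fun k => f (S k))).
 replace (n - 0 - n)%nat with 0%nat by lia. rewrite Cplus_comm. f_equal.
 apply csum_ext; intros. f_equal. lia. Qed.

Lemma csum_plus n f g : csum n (fun k => Cplus (f k) (g k)) = Cplus (csum n f) (csum n g).
Proof. induction n; simpl. rewrite Cplus_0_l; auto. rewrite IHn.
 apply injective_projections; simpl; lra. Qed.

Lemma csum_opp n f : csum n (fun k => Copp (f k)) = Copp (csum n f).
Proof. induction n; simpl. apply injective_projections; simpl; lra. rewrite IHn. apply injective_projections; simpl; lra. Qed.

Lemma rsum_csum n f : RtoC (rsum n f) = csum n (fun k => RtoC (f k)).
Proof. induction n; simpl; auto. rewrite <- IHn. apply injective_projections; simpl; lra. Qed.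

Lemma Cmod_csum n f : Cmod (csum n f) <= rsum n (fun k => Cmod (f k)).
Proof. induction n; simpl. rewrite Cmod_0; lra. eapply Rle_trans. apply Cmod_triangle. lra. Qed.

Lemma rsum_le n f g : (forall k, (k < n)%nat -> f k <= g k) -> rsum n f <= rsum n g.
Proof. induction n; simpl; intros H. lra. pose proof (H n ltac:(lia)). assert (rsum n f <= rsum n g) by (apply IHn; intros; apply H; lia). lra. Qed.

Definition inI (lo : Z) (L : nat) (z : Z) : bool := andb (lo <=? z)%Z (z <? lo + Z.of_nat L)%Z.

Lemma csum_ind lo L lo' L' f : (lo <= lo')%Z -> (lo' + Z.of_nat L' <= lo + Z.of_nat L)%Z ->
 csum L (fun k => if inI lo' L' (lo + Z.of_nat k) then f (lo + Z.of_nat k)%Z else RtoC 0)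
 = csum L' (fun k => f (lo' + Z.of_nat k)%Z).
Proof.
 intros H1 H2. set (d1 := Z.to_nat (lo' - lo)). set (d2 := (L - d1 - L')%nat).
 replace L with (d1 + (L' + d2))%nat by lia.
 rewrite !csum_split. rewrite csum_zero. rewrite Cplus_0_l.
 rewrite (csum_zero d2). rewrite Cplus_0_r. apply csum_ext. intros k Hk.
 unfold inI. replace (lo + Z.of_nat (d1 + k))%Z with (lo' + Z.of_nat k)%Z by lia.
 replace (andb (lo' <=? lo' + Z.of_nat k)%Z (lo' + Z.of_nat k <? lo' + Z.of_nat L')%Z) with true; auto.
 symmetry; apply andb_true_intro; split; [apply Z.leb_le | apply Z.ltb_lt]; lia.
 intros k Hk. unfold inI.
 replace (andb (lo' <=? lo + Z.of_nat (d1 + (L' + k)))%Z (lo + Z.of_nat (d1 + (L' + k)) <? lo' + Z.of_nat L')%Z) with false; auto.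
 symmetry. rewrite (proj2 (Z.ltb_ge _ _)) by lia. apply Bool.andb_false_r.
 intros k Hk. unfold inI.
 replace (andb (lo' <=? lo + Z.of_nat k)%Z (lo + Z.of_nat k <? lo' + Z.of_nat L')%Z) with false; auto.
 symmetry. rewrite (proj2 (Z.leb_gt _ _)) by lia. reflexivity.
Qed.

Lemma csum_reflect lo L c f :
 csum L (fun k => f (- (lo + Z.of_nat k) - c)%Z) = csum L (fun k => f (- (lo + Z.of_nat L - 1) - c + Z.of_nat k)%Z).
Proof. rewrite csum_rev. apply csum_ext. intros k Hk. f_equal. lia. Qed.

Definition box3 (F : Z -> Z -> Z -> C) (l1 l2 l3 : Z) (L1 L2 L3 : nat) : C :=
 csum L1 (fun k1 => csum L2 (fun k2 => csum L3 (fun k3 =>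
   F (l1 + Z.of_nat k1)%Z (l2 + Z.of_nat k2)%Z (l3 + Z.of_nat k3)%Z))).

Definition rbox3 (F : Z -> Z -> Z -> R) (l1 l2 l3 : Z) (L1 L2 L3 : nat) : R :=
 rsum L1 (fun k1 => rsum L2 (fun k2 => rsum L3 (fun k3 =>
   F (l1 + Z.of_nat k1)%Z (l2 + Z.of_nat k2)%Z (l3 + Z.of_nat k3)%Z))).

Lemma rbox3_csum F l1 l2 l3 L1 L2 L3 :
 RtoC (rbox3 F l1 l2 l3 L1 L2 L3) = box3 (fun x y z => RtoC (F x y z)) l1 l2 l3 L1 L2 L3.
Proof. unfold rbox3, box3. rewrite rsum_csum. apply csum_ext; intros.
 rewrite rsum_csum. apply csum_ext; intros. rewrite rsum_csum. auto. Qed.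

Definition ind3 (l1 l2 l3 : Z) (L1 L2 L3 : nat) (x y z : Z) : bool :=
  andb (inI l1 L1 x) (andb (inI l2 L2 y) (inI l3 L3 z)).

Lemma box3_ind F l1 l2 l3 L1 L2 L3 l1' l2' l3' L1' L2' L3' :
 (l1 <= l1')%Z -> (l1' + Z.of_nat L1' <= l1 + Z.of_nat L1)%Z ->
 (l2 <= l2')%Z -> (l2' + Z.of_nat L2' <= l2 + Z.of_nat L2)%Z ->
 (l3 <= l3')%Z -> (l3' + Z.of_nat L3' <= l3 + Z.of_nat L3)%Z ->
 box3 (fun x y z => if ind3 l1' l2' l3' L1' L2' L3' x y z then F x y z else RtoC 0) l1 l2 l3 L1 L2 L3
 = box3 F l1' l2' l3' L1' L2' L3'.
Proof.
 intros. unfold box3, ind3.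
 rewrite <- (csum_ind l1 L1 l1' L1' (fun x => csum L2' (fun k2 => csum L3' (fun k3 => F x (l2' + Z.of_nat k2)%Z (l3' + Z.of_nat k3)%Z)))) by auto.
 apply csum_ext; intros k1 _. destruct (inI l1' L1' (l1 + Z.of_nat k1)); simpl.
 - rewrite <- (csum_ind l2 L2 l2' L2' (fun y => csum L3' (fun k3 => F (l1 + Z.of_nat k1)%Z y (l3' + Z.of_nat k3)%Z))) by auto.
   apply csum_ext; intros k2 _. destruct (inI l2' L2' (l2 + Z.of_nat k2)); simpl.
   + rewrite <- (csum_ind l3 L3 l3' L3' (fun z => F (l1 + Z.of_nat k1)%Z (l2 + Z.of_nat k2)%Z z)) by auto. auto.
   + apply csum_zero; auto.
 - apply csum_zero; intros. apply csum_zero; auto.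
Qed.

Lemma rbox3_ind F l1 l2 l3 L1 L2 L3 l1' l2' l3' L1' L2' L3' :
 (l1 <= l1')%Z -> (l1' + Z.of_nat L1' <= l1 + Z.of_nat L1)%Z ->
 (l2 <= l2')%Z -> (l2' + Z.of_nat L2' <= l2 + Z.of_nat L2)%Z ->
 (l3 <= l3')%Z -> (l3' + Z.of_nat L3' <= l3 + Z.of_nat L3)%Z ->
 rbox3 (fun x y z => if ind3 l1' l2' l3' L1' L2' L3' x y z then F x y z else 0) l1 l2 l3 L1 L2 L3
 = rbox3 F l1' l2' l3' L1' L2' L3'.
Proof.
 intros. assert (H' := box3_ind (fun x y z => RtoC (F x y z)) l1 l2 l3 L1 L2 L3 l1' l2' l3' L1' L2' L3' H H0 H1 H2 H3 H4).
 rewrite <- rbox3_csum in H'.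
 assert (E : RtoC (rbox3 (fun x y z => if ind3 l1' l2' l3' L1' L2' L3' x y z then F x y z else 0) l1 l2 l3 L1 L2 L3) = RtoC (rbox3 F l1' l2' l3' L1' L2' L3')).
 { rewrite <- H', rbox3_csum. unfold box3. repeat (apply csum_ext; intros). destruct ind3; auto. }
 apply (f_equal fst) in E. simpl in E. auto.
Qed.

Lemma Cmod_box3 F l1 l2 l3 L1 L2 L3 :
  Cmod (box3 F l1 l2 l3 L1 L2 L3) <= rbox3 (fun x y z => Cmod (F x y z)) l1 l2 l3 L1 L2 L3.
Proof. unfold box3, rbox3. eapply Rle_trans. apply Cmod_csum. apply rsum_le; intros.
 eapply Rle_trans. apply Cmod_csum. apply rsum_le; intros. apply Cmod_csum. Qed.

Lemma box3_minus F G l1 l2 l3 L1 L2 L3 :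
 Cplus (box3 F l1 l2 l3 L1 L2 L3) (Copp (box3 G l1 l2 l3 L1 L2 L3)) =
 box3 (fun x y z => Cplus (F x y z) (Copp (G x y z))) l1 l2 l3 L1 L2 L3.
Proof. unfold box3. rewrite <- csum_opp, <- csum_plus. apply csum_ext; intros.
 rewrite <- csum_opp, <- csum_plus. apply csum_ext; intros.
 rewrite <- csum_opp, <- csum_plus. auto. Qed.

Lemma rbox3_le F G l1 l2 l3 L1 L2 L3 : (forall x y z, F x y z <= G x y z) ->
 rbox3 F l1 l2 l3 L1 L2 L3 <= rbox3 G l1 l2 l3 L1 L2 L3.
Proof. intros. unfold rbox3. repeat (apply rsum_le; intros). auto. Qed.

Lemma rsum_minus n f g : rsum n (fun k => f k - g k) = rsum n f - rsum n g.
Proof. induction n; simpl; lra. Qed.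

Lemma rbox3_minus F G l1 l2 l3 L1 L2 L3 :
 rbox3 (fun x y z => F x y z - G x y z) l1 l2 l3 L1 L2 L3 = rbox3 F l1 l2 l3 L1 L2 L3 - rbox3 G l1 l2 l3 L1 L2 L3.
Proof. unfold rbox3. rewrite <- rsum_minus. apply rsum_ext; intros.
 rewrite <- rsum_minus. apply rsum_ext; intros. rewrite <- rsum_minus. auto. Qed.

Section Abstract.
Variable F : Z -> Z -> Z -> C.
Variables c1 c2 c3 : Z.
Variable K : R.
Definition tN (N : nat) : Z := (- Z.of_nat N)%Z.
Definition LN (N : nat) : nat := (2 * N + 1)%nat.
Definition Bc (N : nat) : C := box3 F (tN N) (tN N) (tN N) (LN N) (LN N) (LN N).
Definition hF (x y z : Z) : R := Cmod (F x y z).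
Definition Hc (N : nat) : R := rbox3 hF (tN N) (tN N) (tN N) (LN N) (LN N) (LN N).
Hypothesis Hsym : forall x y z, F x y z = Copp (F (-x-c1) (-y-c2) (-z-c3))%Z.
Hypothesis Hbd : forall N, Hc N <= K.

Lemma Hc_embed N M : (N <= M)%nat ->
  Hc N = rbox3 (fun x y z => if ind3 (tN N) (tN N) (tN N) (LN N) (LN N) (LN N) x y z then hF x y z else 0)
     (tN M) (tN M) (tN M) (LN M) (LN M) (LN M).
Proof. intros. unfold Hc. rewrite rbox3_ind; auto; unfold tN, LN; lia. Qed.

Lemma Bc_embed N M : (N <= M)%nat ->
  Bc N = box3 (fun x y z => if ind3 (tN N) (tN N) (tN N) (LN N) (LN N) (LN N) x y z then F x y z else RtoC 0)
     (tN M) (tN M) (tN M) (LN M) (LN M) (LN M).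
Proof. intros. unfold Bc. rewrite box3_ind; auto; unfold tN, LN; lia. Qed.

Lemma hF_pos x y z : 0 <= hF x y z.
Proof. apply Cmod_ge_0. Qed.

Lemma Hc_growing : Un_growing Hc.
Proof. intros N. rewrite (Hc_embed N (S N)) by lia. unfold Hc. apply rbox3_le. intros.
 destruct ind3. lra. apply hF_pos. Qed.

Lemma Hc_cauchy : Cauchy_crit Hc.
Proof. apply CV_Cauchy. apply growing_cv. apply Hc_growing. exists K. intros x [n ->]. apply Hbd. Qed.

Lemma Bc_diff N M : (N <= M)%nat -> Cmod (Cplus (Bc M) (Copp (Bc N))) <= Hc M - Hc N.
Proof. intros. rewrite (Bc_embed N M), (Hc_embed N M) by auto. unfold Bc, Hc.
 rewrite box3_minus, <- rbox3_minus. eapply Rle_trans. apply Cmod_box3. apply rbox3_le. intros.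
 destruct ind3. replace (Cplus (F x y z) (Copp (F x y z))) with (RtoC 0). rewrite Cmod_0. lra.
 apply injective_projections; simpl; lra.
 replace (Cplus (F x y z) (Copp (RtoC 0))) with (F x y z). unfold hF. lra.
 apply injective_projections; simpl; lra. Qed.

Definition Bp (N : nat) : C := box3 F (tN N - c1) (tN N - c2) (tN N - c3) (LN N) (LN N) (LN N).

Lemma refl_t N : (- (tN N + Z.of_nat (LN N) - 1) = tN N)%Z.
Proof. unfold tN, LN. lia. Qed.

Lemma Bc_Bp N : Bc N = Copp (Bp N).
Proof. unfold Bc, Bp, box3.
 transitivity (csum (LN N) (fun k1 => csum (LN N) (fun k2 => csum (LN N) (fun k3 =>
   Copp (F (- (tN N + Z.of_nat k1) - c1) (- (tN N + Z.of_nat k2) - c2) (- (tN N + Z.of_nat k3) - c3)))))%Z).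
 { repeat (apply csum_ext; intros). apply Hsym. }
 rewrite (csum_reflect (tN N) (LN N) c1 (fun x => csum (LN N) (fun k2 => csum (LN N) (fun k3 =>
   Copp (F x (- (tN N + Z.of_nat k2) - c2) (- (tN N + Z.of_nat k3) - c3)))))%Z).
 rewrite refl_t. rewrite <- csum_opp. apply csum_ext; intros k1 _.
 rewrite (csum_reflect (tN N) (LN N) c2 (fun y => csum (LN N) (fun k3 =>
   Copp (F (tN N - c1 + Z.of_nat k1) y (- (tN N + Z.of_nat k3) - c3))))%Z).
 rewrite refl_t. rewrite <- csum_opp. apply csum_ext; intros k2 _.
 rewrite (csum_reflect (tN N) (LN N) c3 (fun z => 
   Copp (F (tN N - c1 + Z.of_nat k1) (tN N - c2 + Z.of_nat k2) z))%Z).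
 rewrite refl_t. rewrite <- csum_opp. apply csum_ext; intros k3 _. auto.
Qed.

Definition Ash : nat := Z.to_nat (Z.abs c1 + Z.abs c2 + Z.abs c3).

Lemma inI_mono N c z : (Z.abs c <= Z.of_nat Ash)%Z -> (Ash <= N)%nat ->
  inI (tN (N - Ash)) (LN (N - Ash)) z = true -> inI (tN N - c) (LN N) z = true.
Proof. unfold inI, tN, LN. intros H1 H2 H3. apply andb_prop in H3. destruct H3 as [H3 H4].
 apply Z.leb_le in H3. apply Z.ltb_lt in H4. apply andb_true_intro; split; [apply Z.leb_le|apply Z.ltb_lt]; lia. Qed.

Lemma pt_bound (b1 b0 : bool) (u : C) : (b0 = true -> b1 = true) ->
  Cmod (Cplus (if b1 then u else RtoC 0) (Copp (if b0 then u else RtoC 0))) <= Cmod u - (if b0 then Cmod u else 0).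
Proof. intros H. destruct b0. rewrite H by auto. replace (Cplus u (Copp u)) with (RtoC 0).
 rewrite Cmod_0; lra. apply injective_projections; simpl; lra.
 replace (Cplus (if b1 then u else RtoC 0) (Copp (RtoC 0))) with (if b1 then u else RtoC 0).
 destruct b1. lra. rewrite Cmod_0. pose proof (Cmod_ge_0 u). lra.
 destruct b1; apply injective_projections; simpl; lra. Qed.

Lemma Bp_est N : (Ash <= N)%nat -> Cmod (Cplus (Bp N) (Copp (Bc (N - Ash)))) <= Hc (N + Ash) - Hc (N - Ash).
Proof. intros HN. 
 assert (A1 : (Z.abs c1 <= Z.of_nat Ash)%Z) by (unfold Ash; lia).
 assert (A2 : (Z.abs c2 <= Z.of_nat Ash)%Z) by (unfold Ash; lia).
 assert (A3 : (Z.abs c3 <= Z.of_nat Ash)%Z) by (unfold Ash; lia).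
 rewrite (Bc_embed (N - Ash) (N + Ash)), (Hc_embed (N - Ash) (N + Ash)) by lia.
 unfold Bp. rewrite <- (box3_ind F (tN (N + Ash)) (tN (N + Ash)) (tN (N + Ash)) (LN (N + Ash)) (LN (N + Ash)) (LN (N + Ash))). 2-7: unfold tN, LN; lia.
 unfold Hc. rewrite box3_minus, <- rbox3_minus. eapply Rle_trans. apply Cmod_box3. apply rbox3_le. intros.
 apply pt_bound. unfold ind3. intros H. apply andb_prop in H. destruct H as [H1 H].
 apply andb_prop in H. destruct H as [H2 H3].
 rewrite (inI_mono N c1 x), (inI_mono N c2 y), (inI_mono N c3 z) by auto. auto.
Qed.

Lemma Bc_diff' n m : Cmod (Cplus (Bc n) (Copp (Bc m))) <= Rabs (Hc n - Hc m).
Proof. destruct (le_ge_dec m n).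
 - eapply Rle_trans. apply Bc_diff; auto. apply Rle_abs.
 - replace (Cplus (Bc n) (Copp (Bc m))) with (Copp (Cplus (Bc m) (Copp (Bc n)))).
   rewrite Cmod_opp. eapply Rle_trans. apply Bc_diff; auto. rewrite Rabs_minus_sym. apply Rle_abs.
   apply injective_projections; simpl; lra.
Qed.

Section Proj.
Variable p : C -> R.
Hypothesis p_bd : forall z, Rabs (p z) <= Cmod z.
Hypothesis p_plus : forall z w, p (Cplus z w) = p z + p w.
Hypothesis p_opp : forall z, p (Copp z) = - p z.

Lemma proj_cauchy : Cauchy_crit (fun N => p (Bc N)).
Proof. intros eps Heps. destruct (Hc_cauchy eps Heps) as [N0 HN]. exists N0. intros n m Hn Hm.
 specialize (HN n m Hn Hm). unfold Rdist in *. eapply Rle_lt_trans; [|apply HN].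
 replace (p (Bc n) - p (Bc m)) with (p (Cplus (Bc n) (Copp (Bc m)))) by (rewrite p_plus, p_opp; ring).
 eapply Rle_trans. apply p_bd. apply Bc_diff'. Qed.

Lemma proj_lim0 : Un_cv (fun N => p (Bc N)) 0.
Proof. destruct (Rcomplete.R_complete _ proj_cauchy) as [l Hl].
 assert (l = 0).
 { destruct (Req_dec l 0) as [|Hne]; auto. exfalso.
   assert (He : Rabs l / 2 > 0) by (apply Rabs_pos_lt in Hne; lra).
   destruct (Hl _ He) as [N1 HN1]. destruct (Hc_cauchy _ He) as [N2 HN2].
   set (N := (N1 + N2 + 2 * Ash)%nat).
   assert (E1 := HN1 N ltac:(unfold N; lia)). assert (E2 := HN1 (N - Ash)%nat ltac:(unfold N; lia)).
   assert (E3 := HN2 (N + Ash)%nat (N - Ash)%nat ltac:(unfold N; lia) ltac:(unfold N; lia)).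
   assert (E4 := Bp_est N ltac:(unfold N; lia)).
   assert (E5 := p_bd (Cplus (Bp N) (Copp (Bc (N - Ash))))).
   rewrite p_plus, p_opp in E5. rewrite (Bc_Bp N), p_opp in E1.
   unfold Rdist in *. pose proof (Rle_abs (Hc (N + Ash) - Hc (N - Ash))).
   assert (E6 : Rabs (p (Bp N) + - p (Bc (N - Ash))) < Rabs l / 2) by lra.
   apply Rabs_def2 in E1. apply Rabs_def2 in E2. apply Rabs_def2 in E6.
   unfold Rabs in *. destruct (Rcase_abs l); lra. }
 subst; auto.
Qed.
End Proj.
Lemma Bc_lim : filterlim Bc eventually (locally (RtoC 0)).
Proof.
 assert (Hf : Un_cv (fun N => fst (Bc N)) 0).
 { apply proj_lim0. intros z. pose proof (Rmax_Cmod z). pose proof (Rmax_l (Rabs (fst z)) (Rabs (snd z))). lra.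
   intros; simpl; auto. intros; simpl; auto. }
 assert (Hs : Un_cv (fun N => snd (Bc N)) 0).
 { apply proj_lim0. intros z. pose proof (Rmax_Cmod z). pose proof (Rmax_r (Rabs (fst z)) (Rabs (snd z))). lra.
   intros; simpl; auto. intros; simpl; auto. }
 apply filterlim_locally. intros eps.
 destruct (Hf eps (cond_pos eps)) as [N1 H1]. destruct (Hs eps (cond_pos eps)) as [N2 H2].
 exists (N1 + N2)%nat. intros n Hn. split.
 - specialize (H1 n ltac:(lia)). unfold Rdist in H1. simpl. unfold ball; simpl; unfold AbsRing_ball, abs, minus, plus, opp; simpl.
   replace (fst (Bc n) + - 0) with (fst (Bc n) - 0) by ring. auto.
 - specialize (H2 n ltac:(lia)). unfold Rdist in H2. simpl. unfold ball; simpl; unfold AbsRing_ball, abs, minus, plus, opp; simpl.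
   replace (snd (Bc n) + - 0) with (snd (Bc n) - 0) by ring. auto.
Qed.
End Abstract.

Open Scope R_scope.

Definition phi (x : R) : R := x / (1 + Rabs x).

Lemma phi_bd x : -1 <= phi x <= 1.
Proof. unfold phi. pose proof (Rabs_pos x). split.
 - apply Rmult_le_reg_r with (1 + Rabs x). lra. unfold Rdiv. rewrite Rmult_assoc, Rinv_l by lra.
   unfold Rabs; destruct (Rcase_abs x); lra.
 - apply Rmult_le_reg_r with (1 + Rabs x). lra. unfold Rdiv. rewrite Rmult_assoc, Rinv_l by lra.
   unfold Rabs; destruct (Rcase_abs x); lra. Qed.

Lemma phi_step x : / (4 * (1 + x ^ 2)) <= phi (x + 1) - phi x.
Proof. unfold phi. destruct (Rle_dec 0 x).
 - rewrite (Rabs_right x), (Rabs_right (x+1)) by lra.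
   replace ((x + 1) / (1 + (x + 1)) - x / (1 + x)) with (/ ((x+2)*(x+1))) by (field; lra).
   apply Rinv_le_contravar. nra. nra.
 - destruct (Rle_dec (-1) x).
   + rewrite (Rabs_left x), (Rabs_right (x+1)) by lra.
     replace ((x + 1) / (1 + (x + 1)) - x / (1 + - x)) with ((1 - 2*x - 2*x^2) / ((x+2)*(1-x))) by (field; lra).
     apply Rmult_le_reg_r with ((x+2)*(1-x)). nra. unfold Rdiv. rewrite Rmult_assoc, Rinv_l by nra.
     apply Rmult_le_reg_l with (4 * (1 + x^2)). nra. rewrite <- Rmult_assoc, Rinv_r by nra. nra.
   + rewrite (Rabs_left x), (Rabs_left (x+1)) by lra.
     replace ((x + 1) / (1 + - (x + 1)) - x / (1 + - x)) with (/ ((-x)*(1-x))) by (field; lra).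
     apply Rinv_le_contravar. nra. nra.
Qed.

Lemma gauss_pt D x : 0 < D -> exp (- (D * x ^ 2)) <= 4 * (1 + / D) * (phi (x + 1) - phi x).
Proof. intros HD. eapply Rle_trans; [| apply Rmult_le_compat_l; [| apply phi_step]].
 2: { assert (0 < / D) by (apply Rinv_0_lt_compat; auto). lra. }
 rewrite exp_Ropp. assert (H1 := exp_ineq1_le (D * x^2)). assert (0 <= D * x^2) by nra.
 apply Rle_trans with (/ (1 + D * x ^ 2)). apply Rinv_le_contravar; lra.
 assert (1 + x^2 <> 0) by nra. assert (D <> 0) by lra.
 replace (4 * (1 + / D) * / (4 * (1 + x ^ 2))) with ((D + 1) / (D * (1 + x^2))) by (field; auto).
 apply Rmult_le_reg_r with (1 + D * x^2). lra. rewrite Rinv_l by lra.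
 unfold Rdiv. apply Rmult_le_reg_r with (D * (1 + x^2)). nra.
 rewrite Rmult_1_l. rewrite !Rmult_assoc. rewrite (Rmult_comm (1 + D * x^2)). rewrite <- (Rmult_assoc (/ _)), Rinv_l by nra. nra.
Qed.

Lemma telescope L t : rsum L (fun k => phi (INR k + t + 1) - phi (INR k + t)) = phi (INR L + t) - phi t.
Proof. induction L; simpl rsum. simpl INR; rewrite Rplus_0_l; ring. rewrite IHL, S_INR. replace (INR L + 1 + t) with (INR L + t + 1) by ring. ring. Qed.

Lemma gauss_sum D t L : 0 < D -> rsum L (fun k => exp (- (D * (INR k + t) ^ 2))) <= 8 * (1 + / D).
Proof. intros HD. assert (0 < / D) by (apply Rinv_0_lt_compat; auto).
 apply Rle_trans with (rsum L (fun k => 4 * (1 + / D) * (phi (INR k + t + 1) - phi (INR k + t)))).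
 - clear H. induction L; simpl. lra. apply Rplus_le_compat. apply IHL. apply gauss_pt; auto.
 - assert (forall L, rsum L (fun k => 4 * (1 + / D) * (phi (INR k + t + 1) - phi (INR k + t))) = 4 * (1 + / D) * rsum L (fun k => phi (INR k + t + 1) - phi (INR k + t))).
   { clear. induction L; simpl. ring. rewrite IHL. ring. }
   rewrite H0, telescope. pose proof (phi_bd (INR L + t)). pose proof (phi_bd t). nra.
Qed.

Definition Gb (d : R) : R := 8 * (1 + / d).

Lemma rsum_scal n c f : rsum n (fun k => c * f k) = c * rsum n f.
Proof. induction n; simpl. ring. rewrite IHn. ring. Qed.

Lemma IZR_shift l k : IZR (l + Z.of_nat k) = INR k + IZR l.
Proof. rewrite plus_IZR, <- INR_IZR_INZ. ring. Qed.

Lemma gauss_sumZ d l L f : 0 < d -> rsum L (fun k => exp (- (d * (IZR (l + Z.of_nat k) + f) ^ 2))) <= Gb d.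
Proof. intros. eapply Rle_trans; [| apply (gauss_sum d (IZR l + f) L H)]. right. apply rsum_ext. intros. rewrite IZR_shift. f_equal. f_equal. f_equal. ring. Qed.

Lemma three_bound (h : Z -> Z -> Z -> R) C0 d1 d2 d3 s3 (f2 : Z -> R) (f1 : Z -> Z -> R) l1 l2 l3 L1 L2 L3 :
  0 <= C0 -> 0 < d1 -> 0 < d2 -> 0 < d3 ->
  (forall x y z, h x y z <= C0 * exp (- (d3 * (IZR x + s3) ^ 2)) * exp (- (d2 * (IZR y + f2 x) ^ 2))
                          * exp (- (d1 * (IZR z + f1 x y) ^ 2))) ->
  rbox3 h l1 l2 l3 L1 L2 L3 <= C0 * Gb d3 * Gb d2 * Gb d1.
Proof.
 intros HC H1 H2 H3 Hb. unfold rbox3.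
 assert (G1 : 0 <= Gb d1) by (unfold Gb; pose proof (Rinv_0_lt_compat _ H1); lra).
 assert (G2 : 0 <= Gb d2) by (unfold Gb; pose proof (Rinv_0_lt_compat _ H2); lra).
 assert (G3 : 0 <= Gb d3) by (unfold Gb; pose proof (Rinv_0_lt_compat _ H3); lra).
 eapply Rle_trans. apply rsum_le. intros k1 _. apply rsum_le. intros k2 _. apply rsum_le. intros k3 _. apply Hb.
 eapply Rle_trans. apply rsum_le. intros k1 _. apply rsum_le. intros k2 _.
 rewrite rsum_scal. apply Rmult_le_compat_l. repeat (first [assumption | apply Rlt_le, exp_pos | apply Rmult_le_pos]).
 apply gauss_sumZ; auto.
 eapply Rle_trans. apply rsum_le. intros k1 _.
 rewrite (rsum_ext _ _ (fun k2 => (C0 * exp (- (d3 * (IZR (l1 + Z.of_nat k1) + s3) ^ 2)) * Gb d1) * exp (- (d2 * (IZR (l2 + Z.of_nat k2) + f2 (l1 + Z.of_nat k1)%Z) ^ 2)))).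
 rewrite rsum_scal. apply Rmult_le_compat_l. repeat (first [assumption | apply Rlt_le, exp_pos | apply Rmult_le_pos]).
 apply gauss_sumZ; auto. intros; ring.
 rewrite (rsum_ext _ _ (fun k1 => (C0 * Gb d1 * Gb d2) * exp (- (d3 * (IZR (l1 + Z.of_nat k1) + s3) ^ 2)))).
 rewrite rsum_scal. replace (C0 * Gb d3 * Gb d2 * Gb d1) with (C0 * Gb d1 * Gb d2 * Gb d3) by ring.
 apply Rmult_le_compat_l. repeat (first [assumption | apply Rlt_le, exp_pos | apply Rmult_le_pos]). apply gauss_sumZ; auto. intros; ring.
Qed.

Open Scope R_scope.

Definition targ (a : hchar) (Zm : nat -> nat -> C) (n : nat -> Z) : C :=
  let nC := fun j => RtoC (IZR (n j)) in
  (Cplus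
    (Cmult (Cmult cPI cI)
       (csum 3 (fun j => csum 3 (fun k => Cmult (Cmult (nC j) (Zm j k)) (nC k)))))
    (Cmult (Cmult (RtoC 2) (Cmult cPI cI))
       (csum 3 (fun j => Cmult (nC j)
          (Cplus (half a (j + 3)%nat) (csum 3 (fun k => Cmult (Zm j k) (half a k)))))))).

Lemma theta_term_targ a Zm n : theta_term a Zm n = cexp (targ a Zm n).
Proof. reflexivity. Qed.

Definition symZ (Zm : nat -> nat -> C) : Prop := forall i j, (i < 3)%nat -> (j < 3)%nat -> Zm i j = Zm j i.

Definition Q6 (q00 q11 q22 q01 q02 q12 v0 v1 v2 : R) : R :=
  q00 * v0^2 + q11 * v1^2 + q22 * v2^2 + 2 * q01 * v0 * v1 + 2 * q02 * v0 * v2 + 2 * q12 * v1 * v2.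

Definition QZ (Zm : nat -> nat -> C) v0 v1 v2 :=
  Q6 (snd (Zm 0%nat 0%nat)) (snd (Zm 1%nat 1%nat)) (snd (Zm 2%nat 2%nat)) (snd (Zm 0%nat 1%nat)) (snd (Zm 0%nat 2%nat)) (snd (Zm 1%nat 2%nat)) v0 v1 v2.

Ltac symrw Hs := rewrite (Hs 1%nat 0%nat), (Hs 2%nat 0%nat), (Hs 2%nat 1%nat) by lia.

Lemma fst_targ a Zm x y z : symZ Zm -> fst (targ a Zm (vec3 x y z)) =
  - PI * QZ Zm (IZR x + IZR (a 0%nat) / 2) (IZR y + IZR (a 1%nat) / 2) (IZR z + IZR (a 2%nat) / 2)
  + PI * QZ Zm (IZR (a 0%nat) / 2) (IZR (a 1%nat) / 2) (IZR (a 2%nat) / 2).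
Proof. intros Hs. unfold targ, csum, half, cPI, cI, vec3, QZ, Q6. simpl. symrw Hs. ring. Qed.

Lemma targ_refl a Zm x y z : symZ Zm ->
  fst (targ a Zm (vec3 x y z)) = fst (targ a Zm (vec3 (-x - a 0%nat)%Z (-y - a 1%nat)%Z (-z - a 2%nat)%Z)) /\ snd (targ a Zm (vec3 x y z)) = snd (targ a Zm (vec3 (-x - a 0%nat)%Z (-y - a 1%nat)%Z (-z - a 2%nat)%Z))
    + PI * (2 * (IZR x * IZR (a 3%nat) + IZR y * IZR (a 4%nat) + IZR z * IZR (a 5%nat)) + (IZR (a 0%nat) * IZR (a 3%nat) + IZR (a 1%nat) * IZR (a 4%nat) + IZR (a 2%nat) * IZR (a 5%nat))).
Proof. intros Hs. unfold targ, csum, half, cPI, cI, vec3. simpl. symrw Hs.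
 repeat first [rewrite minus_IZR | rewrite opp_IZR | rewrite plus_IZR | rewrite mult_IZR]. split; field. Qed.

Lemma perZ (f : R -> R) : (forall x k, f (x + 2 * INR k * PI) = f x) -> forall x M, f (x + 2 * IZR M * PI) = f x.
Proof. intros H x M. destruct (Z_le_gt_dec 0 M).
 - rewrite <- (Z2Nat.id M) by lia. rewrite <- INR_IZR_INZ. apply H.
 - replace M with (- Z.of_nat (Z.to_nat (- M)))%Z by lia. rewrite opp_IZR, <- INR_IZR_INZ.
   rewrite <- (H (x + 2 * - INR (Z.to_nat (- M)) * PI) (Z.to_nat (-M))). f_equal. ring. Qed.

Lemma cexp_odd (u v : C) (M : Z) : fst u = fst v -> snd u = snd v + PI * (2 * IZR M + 1) -> cexp u = Copp (cexp v).
Proof. intros H1 H2. unfold cexp. rewrite H1, H2.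
 replace (snd v + PI * (2 * IZR M + 1)) with ((snd v + PI) + 2 * IZR M * PI) by ring.
 rewrite (perZ cos cos_period), (perZ sin sin_period), neg_cos, neg_sin.
 apply injective_projections; simpl; ring. Qed.

Definition Qz (a : hchar) : Z := (a 0%nat * a 3%nat + a 1%nat * a 4%nat + a 2%nat * a 5%nat)%Z.

Lemma theta_term_sym a Zm x y z : symZ Zm -> Z.odd (Qz a) = true ->
  theta_term a Zm (vec3 x y z) = Copp (theta_term a Zm (vec3 (-x - a 0%nat)%Z (-y - a 1%nat)%Z (-z - a 2%nat)%Z)).
Proof. intros Hs Ho. rewrite !theta_term_targ. destruct (targ_refl a Zm x y z Hs) as [H1 H2].
 destruct (proj1 (Z.odd_spec (Qz a)) Ho) as [m Hm].
 assert (E : IZR (Qz a) = IZR (2 * m + 1)) by (f_equal; auto). unfold Qz in E.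
 rewrite !plus_IZR, !mult_IZR in E.
 apply (cexp_odd _ _ (x * a 3%nat + y * a 4%nat + z * a 5%nat + m)%Z); auto.
 rewrite H2, E. rewrite !plus_IZR, !mult_IZR. ring.
Qed.

Lemma ldl q00 q11 q22 q01 q02 q12 :
  (forall v0 v1 v2, (v0 <> 0 \/ v1 <> 0 \/ v2 <> 0) -> 0 < Q6 q00 q11 q22 q01 q02 q12 v0 v1 v2) ->
  exists D1 D2 D3 al be ga, 0 < D1 /\ 0 < D2 /\ 0 < D3 /\
   forall v0 v1 v2, Q6 q00 q11 q22 q01 q02 q12 v0 v1 v2 =
     D1 * (v2 + al * v0 + be * v1) ^ 2 + D2 * (v1 + ga * v0) ^ 2 + D3 * v0 ^ 2.
Proof. intros Hp.
 assert (H1 : 0 < q22). { specialize (Hp 0 0 1 ltac:(right; right; lra)). unfold Q6 in Hp. lra. }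
 set (p11 := q11 - q12 ^ 2 / q22).
 assert (H2 : 0 < p11). { specialize (Hp 0 1 (- (q12 / q22)) ltac:(right; left; lra)).
   replace (Q6 q00 q11 q22 q01 q02 q12 0 1 (- (q12 / q22))) with p11 in Hp; auto. unfold Q6, p11. field. lra. }
 assert (Hm : 0 < q11 * q22 - q12 ^ 2).
 { replace (q11 * q22 - q12 ^ 2) with (p11 * q22) by (unfold p11; field; lra). apply Rmult_lt_0_compat; auto. }
 set (p01 := q01 - q02 * q12 / q22). set (p00 := q00 - q02 ^ 2 / q22).
 set (ga := p01 / p11). set (al := q02 / q22). set (be := q12 / q22).
 set (D3 := p00 - p01 ^ 2 / p11).
 assert (H3 : 0 < D3). { specialize (Hp 1 (- ga) (- (al - be * ga)) ltac:(left; lra)).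
   replace (Q6 q00 q11 q22 q01 q02 q12 1 (- ga) (- (al - be * ga))) with D3 in Hp; auto.
   unfold Q6, D3, ga, al, be, p00, p01, p11 in *. field. split; lra. }
 exists q22, p11, D3, al, be, ga. repeat split; auto. intros.
 unfold Q6, D3, ga, al, be, p00, p01, p11 in *. field. split; lra.
Qed.

Lemma Cmod_cexp u : Cmod (cexp u) = exp (fst u).
Proof. unfold cexp, Cmod. cbn [fst snd].
 replace ((exp (fst u) * cos (snd u)) ^ 2 + (exp (fst u) * sin (snd u)) ^ 2) with (exp (fst u) ^ 2)
  by (pose proof (sin2_cos2 (snd u)) as H; unfold Rsqr in H;
      transitivity (exp (fst u) ^ 2 * (sin (snd u) * sin (snd u) + cos (snd u) * cos (snd u))); [rewrite H; ring | ring]).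
 apply sqrt_pow2. apply Rlt_le, exp_pos. Qed.

Lemma inH3_pos Zm : in_H3 Zm -> forall v0 v1 v2, (v0 <> 0 \/ v1 <> 0 \/ v2 <> 0) -> 0 < QZ Zm v0 v1 v2.
Proof. intros [Hs Hp] v0 v1 v2 Hv.
 specialize (Hp (fun i => match i with 0%nat => v0 | 1%nat => v1 | 2%nat => v2 | _ => 0 end)).
 assert (E : rsum 3 (fun i => rsum 3 (fun j => (fun i => match i with 0%nat => v0 | 1%nat => v1 | 2%nat => v2 | _ => 0 end) i * Im (Zm i j) *
      (fun i => match i with 0%nat => v0 | 1%nat => v1 | 2%nat => v2 | _ => 0 end) j)) = QZ Zm v0 v1 v2).
 { unfold QZ, Q6, Im. simpl. symrw Hs. ring. }
 rewrite <- E. apply Hp. destruct Hv as [H|[H|H]]; [exists 0%nat|exists 1%nat|exists 2%nat]; split; auto; lia.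
Qed.

Lemma theta_bound a Zm : in_H3 Zm -> exists K, forall N,
  Hc (fun x y z => theta_term a Zm (vec3 x y z)) N <= K.
Proof. intros HZ. assert (Hs : symZ Zm) by (destruct HZ; auto).
 destruct (ldl _ _ _ _ _ _ (inH3_pos Zm HZ)) as (D1 & D2 & D3 & al & be & ga & P1 & P2 & P3 & Hq).
 set (c := QZ Zm (IZR (a 0%nat) / 2) (IZR (a 1%nat) / 2) (IZR (a 2%nat) / 2)).
 exists (exp (PI * c) * Gb (PI * D3) * Gb (PI * D2) * Gb (PI * D1)). intros N.
 unfold Hc. apply three_bound with (s3 := IZR (a 0%nat) / 2)
   (f2 := fun x => IZR (a 1%nat) / 2 + ga * (IZR x + IZR (a 0%nat) / 2))
   (f1 := fun x y => IZR (a 2%nat) / 2 + al * (IZR x + IZR (a 0%nat) / 2) + be * (IZR y + IZR (a 1%nat) / 2)).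
 apply Rlt_le, exp_pos. 1-3: apply Rmult_lt_0_compat; auto; apply PI_RGT_0.
 intros x y z. unfold hF. rewrite theta_term_targ, Cmod_cexp, fst_targ by auto.
 unfold QZ at 1. rewrite Hq. fold c. rewrite <- !exp_plus. right. f_equal. ring.
Qed.

Lemma odd_vanish a Zm : in_H3 Zm -> Z.odd (Qz a) = true -> theta_vanishes a Zm.
Proof. intros HZ Ho. assert (Hs : symZ Zm) by (destruct HZ; auto).
 destruct (theta_bound a Zm HZ) as [K HK].
 exists (RtoC 0). split.
 - apply (filterlim_ext (Bc (fun x y z => theta_term a Zm (vec3 x y z)))).
   + intros N. unfold Bc, theta_box, box3, tN, LN. repeat (apply csum_ext; intros). f_equal. f_equal; lia.
   + apply (Bc_lim _ (a 0%nat) (a 1%nat) (a 2%nat) K); auto. intros. apply theta_term_sym; auto.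
 - rewrite Cmult_0_r. auto.
Qed.

Open Scope R_scope.

Lemma estar_val a : estar a = if Z.even (Qz a) then RtoC 1 else RtoC (-1).
Proof. unfold estar.
 replace (Cmult (Cmult (RtoC 4) (Cmult cPI cI)) (csum 3 (fun j => Cmult (half a j) (half a (j + 3)%nat))))
   with ((0, PI * IZR (Qz a)) : C).
 2: { unfold csum, half, cPI, cI, Qz. apply injective_projections; simpl;
      rewrite ?plus_IZR, ?mult_IZR; field. }
 unfold cexp. cbn [fst snd]. rewrite exp_0.
 destruct (Z.even (Qz a)) eqn:E.
 - apply Z.even_spec in E. destruct E as [m Hm]. rewrite Hm, mult_IZR.
   replace (PI * (2 * IZR m)) with (0 + 2 * IZR m * PI) by ring.
   rewrite (perZ cos cos_period), (perZ sin sin_period), cos_0, sin_0. apply injective_projections; simpl; ring.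
 - assert (Z.odd (Qz a) = true) by (rewrite <- Z.negb_even, E; auto).
   apply Z.odd_spec in H. destruct H as [m Hm]. rewrite Hm, plus_IZR, mult_IZR.
   replace (PI * (2 * IZR m + 1)) with ((0 + PI) + 2 * IZR m * PI) by ring.
   rewrite (perZ cos cos_period), (perZ sin sin_period), neg_cos, neg_sin, cos_0, sin_0. apply injective_projections; simpl; ring.
Qed.

Lemma heven_iff a : heven a <-> Z.even (Qz a) = true.
Proof. unfold heven. rewrite estar_val. destruct (Z.even (Qz a)); split; intros H; auto; try discriminate;
 apply (f_equal fst) in H; simpl in H; lra. Qed.

Lemma estar_m1 a : estar a = RtoC (-1) <-> Z.even (Qz a) = false.
Proof. rewrite estar_val. destruct (Z.even (Qz a)); split; intros H; auto; try discriminate;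
 apply (f_equal fst) in H; simpl in H; lra. Qed.

Open Scope Z_scope.

Lemma Qf_Qz x : Qf x = Qz x.
Proof. unfold Qf, Qz, zsum. simpl. ring. Qed.

Lemma even_of_mod A B : (A - B) mod 2 = 0 -> Z.even A = Z.even B.
Proof. intros H. apply Z.mod_divide in H; [|lia]. destruct H as [k Hk].
 replace A with (B + k * 2) by lia. rewrite Z.even_add, Z.even_mul. simpl. rewrite Bool.orb_true_r.
 destruct (Z.even B); auto. Qed.

Lemma G12_even g x : Gamma12 g -> Z.even (Qz (mv g x)) = Z.even (Qz x).
Proof. intros [_ H]. rewrite <- !Qf_Qz. apply even_of_mod. apply H. Qed.

Lemma mod2_ex a : a mod 2 = 0 -> a = (a / 2) * 2.
Proof. intros H. pose proof (Z.div_mod a 2 ltac:(lia)). lia. Qed.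

Lemma hequiv_mv g x y : hequiv x y -> hequiv (mv g x) (mv g y).
Proof. intros H k Hk.
 assert (E : forall j, (j < 6)%nat -> x j = y j + ((x j - y j) / 2) * 2).
 { intros j Hj. pose proof (mod2_ex _ (H j Hj)). lia. }
 unfold mv, zsum. simpl. rewrite (E 0%nat), (E 1%nat), (E 2%nat), (E 3%nat), (E 4%nat), (E 5%nat) by lia.
 match goal with |- ?e mod 2 = 0 => replace e with
   ((g k 0%nat * ((x 0%nat - y 0%nat) / 2) + g k 1%nat * ((x 1%nat - y 1%nat) / 2) + g k 2%nat * ((x 2%nat - y 2%nat) / 2)
    + g k 3%nat * ((x 3%nat - y 3%nat) / 2) + g k 4%nat * ((x 4%nat - y 4%nat) / 2) + g k 5%nat * ((x 5%nat - y 5%nat) / 2)) * 2) by ring end.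
 apply Z.mod_mul. lia. Qed.

Lemma sform_sub2 (p q w v : nat -> Z) : (forall i, (i < 6)%nat -> p i - q i = w i * 2) ->
  sform p v - sform q v = sform w v * 2.
Proof. intros H. unfold sform, zsum. simpl.
 assert (E : forall i, (i < 6)%nat -> p i = q i + w i * 2) by (intros i Hi; specialize (H i Hi); lia).
 rewrite (E 0%nat), (E 1%nat), (E 2%nat), (E 3%nat), (E 4%nat), (E 5%nat) by lia. ring. Qed.

Definition unitv (j : nat) : nat -> Z := fun m => if Nat.eqb m j then 1 else 0.

Lemma hequiv_mv_inv g x y : Sp6Z g -> hequiv (mv g x) (mv g y) -> hequiv x y.
Proof. intros Hsp H.
 set (w := fun i => (mv g x i - mv g y i) / 2).
 assert (Hw : forall i, (i < 6)%nat -> mv g x i - mv g y i = w i * 2) by (intros; apply mod2_ex, H; auto).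
 assert (Hj : forall j, (sform x (unitv j) - sform y (unitv j)) mod 2 = 0).
 { intros j. rewrite <- (Hsp x), <- (Hsp y). rewrite (sform_sub2 _ _ w) by auto. apply Z.mod_mul. lia. }
 intros k Hk. destruct k as [|[|[|[|[|[|k]]]]]]; try lia.
 - specialize (Hj 3%nat). unfold sform, zsum, unitv in Hj. simpl in Hj. rewrite <- Hj. f_equal. ring.
 - specialize (Hj 4%nat). unfold sform, zsum, unitv in Hj. simpl in Hj. rewrite <- Hj. f_equal. ring.
 - specialize (Hj 5%nat). unfold sform, zsum, unitv in Hj. simpl in Hj. rewrite <- Hj. f_equal. ring.
 - specialize (Hj 0%nat). unfold sform, zsum, unitv in Hj. simpl in Hj.
   apply Z.mod_divide in Hj; [|lia]. apply Z.mod_divide; [lia|]. destruct Hj as [c Hc]. exists (- c). lia.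
 - specialize (Hj 1%nat). unfold sform, zsum, unitv in Hj. simpl in Hj.
   apply Z.mod_divide in Hj; [|lia]. apply Z.mod_divide; [lia|]. destruct Hj as [c Hc]. exists (- c). lia.
 - specialize (Hj 2%nat). unfold sform, zsum, unitv in Hj. simpl in Hj.
   apply Z.mod_divide in Hj; [|lia]. apply Z.mod_divide; [lia|]. destruct Hj as [c Hc]. exists (- c). lia.
Qed.

From Stdlib Require Import List.
Import ListNotations.
Open Scope Z_scope.

Definition U0 (i : nat) : bool := match i with 1%nat | 3%nat | 5%nat | 7%nat => true | _ => false end.

Definition hequivb (a b : hchar) : bool :=
  forallb (fun k => Z.eqb ((a k - b k) mod 2) 0) (List.seq 0 6).

Lemma hequivb_spec a b : hequivb a b = true <-> hequiv a b.
Proof. unfold hequivb, hequiv. rewrite forallb_forall. split.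
 - intros H k Hk. apply Z.eqb_eq. apply H. apply in_seq. lia.
 - intros H k Hk. apply in_seq in Hk. apply Z.eqb_eq. apply H. lia. Qed.

Definition check (S : nat -> bool) : bool :=
 let c := cardB (symdiff S U0) in
 let e := eta_tilde S in
 if Nat.even (cardB S) then
   (if Nat.eqb c 4 then Z.even (Qz e) && negb (hequivb e vU)
    else if Nat.eqb c 0 || Nat.eqb c 8 then Z.even (Qz e) && hequivb e vU
    else if Nat.eqb c 2 || Nat.eqb c 6 then negb (Z.even (Qz e))
    else false)%bool
 else true.

Lemma check_restrict S : check S = check (fun i => nth i [S 0%nat; S 1%nat; S 2%nat; S 3%nat; S 4%nat; S 5%nat; S 6%nat; S 7%nat] false).
Proof. reflexivity. Qed.

Lemma check_all S : check S = true.
Proof. rewrite check_restrict.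
 destruct (S 0%nat), (S 1%nat), (S 2%nat), (S 3%nat), (S 4%nat), (S 5%nat), (S 6%nat), (S 7%nat); vm_compute; reflexivity.
Qed.

Lemma cardB_ext S T : (forall i, (i < 8)%nat -> S i = T i) -> cardB S = cardB T.
Proof. intros H. unfold cardB. simpl.
 rewrite (H 0%nat), (H 1%nat), (H 2%nat), (H 3%nat), (H 4%nat), (H 5%nat), (H 6%nat), (H 7%nat) by lia. reflexivity. Qed.

Lemma U_geta_eq g : Gamma12 g -> forall i, (i < 8)%nat -> U_geta g i = U0 i.
Proof. intros Hg i Hi. unfold U_geta.
 destruct (Nat.eqb i 7) eqn:E7. apply Nat.eqb_eq in E7. subst. reflexivity.
 assert (Hlt : Nat.ltb i 7 = true) by (apply Nat.ltb_lt; apply Nat.eqb_neq in E7; lia). rewrite Hlt. apply Nat.ltb_lt in Hlt. clear Hi E7.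
 match goal with |- (if ?x then _ else _) = _ => destruct x as [E|E] end.
 - apply estar_m1 in E. unfold geta in E. rewrite G12_even in E by auto.
   destruct i as [|[|[|[|[|[|[|i]]]]]]]; try lia; vm_compute in E; try discriminate; reflexivity.
 - rewrite estar_m1 in E. unfold geta in E. rewrite G12_even in E by auto.
   destruct i as [|[|[|[|[|[|[|i]]]]]]]; try lia; try reflexivity; exfalso; apply E; vm_compute; reflexivity.
Qed.

Lemma hequiv_sym a b : hequiv a b -> hequiv b a.
Proof. intros H k Hk. specialize (H k Hk). apply Z.mod_divide in H; [|lia]. apply Z.mod_divide; [lia|].
 destruct H as [c Hc]. exists (- c). lia. Qed.

Lemma hequiv_trans a b c : hequiv a b -> hequiv b c -> hequiv a c.
Proof. intros H1 H2 k Hk. specialize (H1 k Hk). specialize (H2 k Hk).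
 apply Z.mod_divide in H1; [|lia]. apply Z.mod_divide in H2; [|lia]. apply Z.mod_divide; [lia|].
 destruct H1 as [c1 Hc1]. destruct H2 as [c2 Hc2]. exists (c1 + c2). lia. Qed.

Lemma part2 Zm delta : in_H3 Zm ->
  (forall a : hchar, heven a -> (theta_vanishes a Zm <-> hequiv a delta)) ->
  forall g, Gamma12 g -> hequiv (mv g vU) delta -> vanishing_criterion Zm g.
Proof. intros HZ Hth g Hg Hd S HS.
 rewrite (cardB_ext (symdiff S (U_geta g)) (symdiff S U0)) by (intros i Hi; unfold symdiff; rewrite U_geta_eq; auto).
 pose proof (check_all S) as Hc. unfold check in Hc. rewrite HS in Hc.
 assert (Hpar : Z.even (Qz (geta g S)) = Z.even (Qz (eta_tilde S))) by (apply G12_even; auto).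
 assert (Heq : hequiv (geta g S) delta <-> hequiv (eta_tilde S) vU).
 { split; intros H.
   - apply (hequiv_mv_inv g). apply Hg. apply (hequiv_trans _ delta); auto. apply hequiv_sym; auto.
   - apply (hequiv_trans _ (mv g vU)); auto. apply hequiv_mv; auto. }
 destruct (Nat.eqb (cardB (symdiff S U0)) 4) eqn:E4.
 - apply Bool.andb_true_iff in Hc. destruct Hc as [Hc1 Hc2]. apply Nat.eqb_eq in E4. rewrite E4.
   rewrite Hth by (apply heven_iff; rewrite Hpar; auto). rewrite Heq. rewrite <- hequivb_spec.
   destruct (hequivb (eta_tilde S) vU); simpl in Hc2; try discriminate. split; intros; try discriminate; lia.
 - apply Nat.eqb_neq in E4. split; intros; auto.
   destruct (Nat.eqb (cardB (symdiff S U0)) 0 || Nat.eqb (cardB (symdiff S U0)) 8)%bool.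
   + apply Bool.andb_true_iff in Hc. destruct Hc as [Hc1 Hc2].
     apply Hth. apply heven_iff; rewrite Hpar; auto. apply Heq. apply hequivb_spec; auto.
   + destruct (Nat.eqb (cardB (symdiff S U0)) 2 || Nat.eqb (cardB (symdiff S U0)) 6)%bool; try discriminate.
     apply odd_vanish; auto. rewrite <- Z.negb_even. unfold geta. rewrite G12_even by auto.
     destruct (Z.even (Qz (eta_tilde S))); auto.
Qed.

From Stdlib Require Import List FunctionalExtensionality.
Open Scope Z_scope.

Definition Tm (v : nat -> Z) : nat -> nat -> Z := fun i j =>
  (if Nat.eqb i j then 1 else 0) + v i * (if Nat.ltb j 3 then v (j + 3)%nat else - v (j - 3)%nat).

Definition mm (g h : nat -> nat -> Z) : nat -> nat -> Z := fun i j => zsum 6 (fun k => g i k * h k j).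

Lemma mv_mm g h x : mv (mm g h) x = mv g (mv h x).
Proof. apply functional_extensionality. intros i. unfold mv, mm, zsum. simpl. ring. Qed.

Lemma G12_mm g h : Gamma12 g -> Gamma12 h -> Gamma12 (mm g h).
Proof. intros [Sg Qg] [Sh Qh]. split.
 - intros x y. rewrite !mv_mm. rewrite Sg. apply Sh.
 - intros x. rewrite mv_mm. specialize (Qg (mv h x)). specialize (Qh x).
   apply Z.mod_divide in Qg; [|lia]. apply Z.mod_divide in Qh; [|lia]. apply Z.mod_divide; [lia|].
   destruct Qg as [c1 H1]. destruct Qh as [c2 H2]. exists (c1 + c2). lia. Qed.

Lemma G12_Tm v : Z.odd (Qz v) = true -> Gamma12 (Tm v).
Proof. intros Ho. split.
 - intros x y. unfold sform, mv, zsum, Tm. cbn [zsum Nat.eqb Nat.ltb Nat.leb Nat.add Nat.sub]. ring.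
 - intros x. destruct (proj1 (Z.odd_spec _) Ho) as [m Hm].
   set (s := sform x v). set (t := x 3%nat * v 0%nat + x 4%nat * v 1%nat + x 5%nat * v 2%nat).
   assert (E : Qf (mv (Tm v) x) - Qf x = (1 + Qz v) * s ^ 2 + 2 * s * t).
   { unfold s, t, Qf, Qz, sform, mv, Tm. cbn [zsum Nat.eqb Nat.ltb Nat.leb Nat.add Nat.sub]. ring. }
   rewrite E, Hm. replace ((1 + (2 * m + 1)) * s ^ 2 + 2 * s * t) with (((m + 1) * s ^ 2 + s * t) * 2) by ring.
   apply Z.mod_mul. lia.
Qed.
Definition wit (n : nat) : (nat -> Z) * (nat -> Z) :=
  match n with
  | 32%nat => (vec6 0 0 1 0 0 1, vec6 1 1 1 1 0 0)
  | 16%nat => (vec6 0 0 1 0 0 1, vec6 1 1 1 1 1 1)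
  | 48%nat => (vec6 0 0 1 0 1 1, vec6 1 1 0 1 0 1)
  | 8%nat => (vec6 0 0 1 0 0 1, vec6 1 1 1 0 0 1)
  | 40%nat => (vec6 0 0 1 0 1 1, vec6 1 1 0 0 1 1)
  | 24%nat => (vec6 0 1 0 0 1 0, vec6 1 0 1 0 0 1)
  | 56%nat => (vec6 0 0 1 0 0 1, vec6 1 1 1 0 1 0)
  | 4%nat => (vec6 0 0 1 0 0 1, vec6 1 1 0 1 0 1)
  | 20%nat => (vec6 0 0 1 0 1 1, vec6 1 1 1 1 0 0)
  | 12%nat => (vec6 0 0 1 0 1 1, vec6 1 1 1 0 1 0)
  | 28%nat => (vec6 0 0 1 0 0 1, vec6 1 1 0 0 1 1)
  | 2%nat => (vec6 0 0 1 0 1 1, vec6 1 0 0 1 1 0)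
  | 34%nat => (vec6 0 0 1 0 0 1, vec6 1 0 1 1 0 0)
  | 10%nat => (vec6 0 0 1 0 0 1, vec6 1 0 1 0 0 1)
  | 42%nat => (vec6 0 0 1 1 0 1, vec6 1 0 0 1 0 1)
  | 6%nat => (vec6 0 0 1 0 0 1, vec6 1 0 0 1 0 1)
  | 54%nat => (vec6 0 0 1 0 0 1, vec6 1 0 0 1 1 0)
  | 14%nat => (vec6 0 0 1 1 0 1, vec6 1 0 1 1 0 0)
  | 62%nat => (vec6 0 0 1 0 1 1, vec6 1 0 1 0 0 1)
  | 1%nat => (vec6 0 0 1 0 0 1, vec6 0 1 1 1 0 1)
  | 33%nat => (vec6 0 0 1 0 1 1, vec6 0 1 0 1 1 1)
  | 17%nat => (vec6 0 0 1 1 0 1, vec6 0 1 0 0 1 0)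
  | 49%nat => (vec6 0 0 1 0 0 1, vec6 0 1 1 1 1 0)
  | 5%nat => (vec6 0 0 1 0 1 1, vec6 0 1 1 1 1 0)
  | 21%nat => (vec6 0 0 1 0 0 1, vec6 0 1 0 1 1 1)
  | 45%nat => (vec6 0 0 1 1 0 1, vec6 0 1 1 1 0 1)
  | 61%nat => (vec6 0 0 1 0 0 1, vec6 0 1 0 0 1 0)
  | 3%nat => (vec6 0 0 1 0 0 1, vec6 0 0 1 1 0 1)
  | 35%nat => (vec6 0 1 0 0 1 0, vec6 0 1 1 1 1 0)
  | 27%nat => (vec6 0 0 1 0 0 1, vec6 0 0 1 0 1 1)
  | 59%nat => (vec6 0 1 0 1 1 1, vec6 0 1 1 1 0 1)
  | 7%nat => (vec6 0 1 0 0 1 0, vec6 0 1 0 1 1 1)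
  | 55%nat => (vec6 0 0 1 0 1 1, vec6 0 0 1 1 0 1)
  | 47%nat => (vec6 0 0 1 0 0 1, vec6 0 0 1 0 0 1)
  | 31%nat => (vec6 0 1 1 1 0 1, vec6 0 1 1 1 1 0)
  | _ => (vec6 0 0 0 0 0 0, vec6 0 0 0 0 0 0)
  end.

Definition good (b0 b1 b2 b3 b4 b5 : Z) : bool :=
  let (v1, v2) := wit (Z.to_nat (b0 + 2 * b1 + 4 * b2 + 8 * b3 + 16 * b4 + 32 * b5)) in
  (Z.odd (Qz v1) && Z.odd (Qz v2) && hequivb (mv (mm (Tm v2) (Tm v1)) vU) (vec6 b0 b1 b2 b3 b4 b5))%bool.

Lemma good_all b0 b1 b2 b3 b4 b5 :
  (b0 = 0 \/ b0 = 1) -> (b1 = 0 \/ b1 = 1) -> (b2 = 0 \/ b2 = 1) -> (b3 = 0 \/ b3 = 1) -> (b4 = 0 \/ b4 = 1) -> (b5 = 0 \/ b5 = 1) ->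
  Z.even (Qz (vec6 b0 b1 b2 b3 b4 b5)) = true ->
  ~ (b0 = 0 /\ b1 = 0 /\ b2 = 0 /\ b3 = 0 /\ b4 = 0 /\ b5 = 0) ->
  good b0 b1 b2 b3 b4 b5 = true.
Proof. intros H0 H1 H2 H3 H4 H5 He Hn.
 destruct H0, H1, H2, H3, H4, H5; subst; try (vm_compute in He; discriminate); try (exfalso; apply Hn; tauto);
 vm_compute; reflexivity. Qed.

Lemma hequiv_Qz a b : hequiv a b -> Z.even (Qz a) = Z.even (Qz b).
Proof. intros H. apply even_of_mod.
 assert (E : forall j, (j < 6)%nat -> a j = b j + ((a j - b j) / 2) * 2).
 { intros j Hj. pose proof (mod2_ex _ (H j Hj)). lia. }
 unfold Qz. rewrite (E 0%nat), (E 1%nat), (E 2%nat), (E 3%nat), (E 4%nat), (E 5%nat) by lia.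
 set (t0 := (a 0%nat - b 0%nat) / 2). set (t1 := (a 1%nat - b 1%nat) / 2). set (t2 := (a 2%nat - b 2%nat) / 2).
 set (t3 := (a 3%nat - b 3%nat) / 2). set (t4 := (a 4%nat - b 4%nat) / 2). set (t5 := (a 5%nat - b 5%nat) / 2).
 match goal with |- ?e mod 2 = 0 => replace e with
   ((b 0%nat * t3 + t0 * b 3%nat + 2 * t0 * t3 + b 1%nat * t4 + t1 * b 4%nat + 2 * t1 * t4 + b 2%nat * t5 + t2 * b 5%nat + 2 * t2 * t5) * 2) by ring end.
 apply Z.mod_mul. lia. Qed.

Lemma exist_g delta : heven delta -> ~ hequiv delta hzero -> exists g, Gamma12 g /\ hequiv (mv g vU) delta.
Proof. intros He Hn.
 set (b := fun k => delta k mod 2).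
 assert (Hb : forall k, b k = 0 \/ b k = 1) by (intros k; unfold b; pose proof (Z.mod_pos_bound (delta k) 2); lia).
 assert (Hp : hequiv (vec6 (b 0%nat) (b 1%nat) (b 2%nat) (b 3%nat) (b 4%nat) (b 5%nat)) delta).
 { intros k Hk. assert (G : forall j, (b j - delta j) mod 2 = 0).
   { intros j. unfold b. pose proof (Z.div_mod (delta j) 2 ltac:(lia)).
     replace (delta j mod 2 - delta j) with ((- (delta j / 2)) * 2) by lia. apply Z.mod_mul; lia. }
   destruct k as [|[|[|[|[|[|k]]]]]]; try lia; apply G. }
 assert (Hev : Z.even (Qz (vec6 (b 0%nat) (b 1%nat) (b 2%nat) (b 3%nat) (b 4%nat) (b 5%nat))) = true).
 { rewrite (hequiv_Qz _ _ Hp). apply heven_iff; auto. }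
 assert (Hnz : ~ (b 0%nat = 0 /\ b 1%nat = 0 /\ b 2%nat = 0 /\ b 3%nat = 0 /\ b 4%nat = 0 /\ b 5%nat = 0)).
 { intros (Z0 & Z1 & Z2 & Z3 & Z4 & Z5). apply Hn. intros k Hk. unfold hzero. rewrite Z.sub_0_r.
   destruct k as [|[|[|[|[|[|k]]]]]]; try lia; auto. }
 pose proof (good_all _ _ _ _ _ _ (Hb 0%nat) (Hb 1%nat) (Hb 2%nat) (Hb 3%nat) (Hb 4%nat) (Hb 5%nat) Hev Hnz) as Hg.
 unfold good in Hg. destruct (wit _) as [v1 v2].
 apply Bool.andb_true_iff in Hg. destruct Hg as [Hg Hq]. apply Bool.andb_true_iff in Hg. destruct Hg as [O1 O2].
 exists (mm (Tm v2) (Tm v1)). split.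
 - apply G12_mm; apply G12_Tm; auto.
 - apply (hequiv_trans _ _ _ (proj1 (hequivb_spec _ _) Hq) Hp).
Qed.

Theorem proposition5p6 :
  forall (Zm : nat -> nat -> C) (delta : hchar),
    in_H3 Zm ->
    heven delta ->
    ~ hequiv delta hzero ->
    (forall a : hchar, heven a -> (theta_vanishes a Zm <-> hequiv a delta)) ->
    (exists g, Gamma12 g /\ vanishing_criterion Zm g) /\
    (forall g, Gamma12 g -> hequiv (mv g vU) delta -> vanishing_criterion Zm g).
Proof.
 intros Zm delta HZ He Hn Hth. split.
 - destruct (exist_g delta He Hn) as [g [Hg Hd]]. exists g. split; auto. apply (part2 Zm delta); auto.
 - apply (part2 Zm delta); auto.
Qed.
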